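(* Every countable crowded $T_1$ space of weight smaller than $\mathfrak{m}_c$ is $\omega$-resolvable, i.e., it can be partitioned into countably many pairwise disjoint dense subsets.
   Context: A space is crowded if it has no isolated points. $\mathfrak{m}_c$ is the least cardinal $\kappa$ such that Martin's Axiom MA$(\kappa)$ for countable posets fails. *)

(* Defs.v *)
From Stdlib Require Import Classical.

Set Implicit Arguments.

Record topology (X : Type) : Type := Topology {
  is_open : (X -> Prop) -> Prop;
  open_full : is_open (fun _ => True);
  open_inter : forall U V, is_open U -> is_open V -> is_open (fun x => U x /\ V x);
  open_union : forall F : (X -> Prop) -> Prop,
      (forall U, F U -> is_open U) -> is_open (fun x => exists U, F U /\ U x)
}.

Definition countable (A : Type) : Prop :=
  exists f : A -> nat, forall a b, f a = f b -> a = b.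

Definition card_le (J I : Type) : Prop :=
  exists f : J -> I, forall a b, f a = f b -> a = b.

Definition T1 {X} (t : topology X) : Prop :=
  forall x y : X, x <> y -> exists U, is_open t U /\ U x /\ ~ U y.

Definition isolated {X} (t : topology X) (x : X) : Prop :=
  is_open t (fun y => y = x).

Definition crowded {X} (t : topology X) : Prop :=
  forall x : X, ~ isolated t x.

Definition is_base {X} (t : topology X) (I : Type) (B : I -> X -> Prop) : Prop :=
  (forall i, is_open t (B i)) /\
  (forall U x, is_open t U -> U x -> exists i, B i x /\ forall y, B i y -> U y).

Definition dense {X} (t : topology X) (D : X -> Prop) : Prop :=
  forall U, is_open t U -> (exists x, U x) -> exists x, U x /\ D x.

Definition omega_resolvable {X} (t : topology X) : Prop :=
  exists D : nat -> X -> Prop,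
    (forall n, dense t (D n)) /\
    (forall n m x, n <> m -> D n x -> D m x -> False) /\
    (forall x, exists n, D n x).

(* Partial orders (forcing convention: q <= p means q extends p). *)
Definition is_partial_order {P : Type} (le : P -> P -> Prop) : Prop :=
  (forall p, le p p) /\
  (forall p q r, le p q -> le q r -> le p r) /\
  (forall p q, le p q -> le q p -> p = q).

Definition dense_in_poset {P : Type} (le : P -> P -> Prop) (D : P -> Prop) : Prop :=
  forall p, exists q, D q /\ le q p.

Definition is_filter {P : Type} (le : P -> P -> Prop) (G : P -> Prop) : Prop :=
  (exists p, G p) /\
  (forall p q, G p -> le p q -> G q) /\
  (forall p q, G p -> G q -> exists r, G r /\ le r p /\ le r q).

Definition MA_countable (J : Type) : Prop :=
  forall (P : Type) (le : P -> P -> Prop),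
    countable P -> inhabited P -> is_partial_order le ->
    forall D : J -> P -> Prop,
      (forall j, dense_in_poset le (D j)) ->
      exists G, is_filter le G /\ forall j, exists p, G p /\ D j p.

(* kappa = |I| < m_c, where m_c is the least cardinal for which MA for
   countable posets fails: i.e. MA(lambda) holds for every lambda <= kappa. *)
Definition lt_m_c (I : Type) : Prop :=
  forall J : Type, card_le J I -> MA_countable J.

(* weight(t) < m_c: some base has cardinality < m_c (the weight is the least
   cardinality of a base). *)
Definition weight_lt_m_c {X} (t : topology X) : Prop :=
  exists (I : Type) (B : I -> X -> Prop), is_base t B /\ lt_m_c I.

(* Main.v *)
Require Import Defs.
From Stdlib Require Import Classical ClassicalEpsilon FunctionalExtensionality PropExtensionality List Cantor Lia.
Import ListNotations.

Lemma open_ext {X} (t : topology X) (U V : X -> Prop) :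
  (forall x, U x <-> V x) -> is_open t U -> is_open t V.
Proof.
  intros H HU. assert (U = V) as <-; auto.
  extensionality x. apply propositional_extensionality. apply H.
Qed.

Lemma open_minus {X} (t : topology X) (U : X -> Prop) (z : X) :
  T1 t -> is_open t U -> is_open t (fun x => U x /\ x <> z).
Proof.
  intros HT HU.
  assert (Hc : is_open t (fun x => exists V, (is_open t V /\ ~ V z) /\ V x)).
  { apply open_union. tauto. }
  apply (open_ext t (fun x => U x /\ (exists V, (is_open t V /\ ~ V z) /\ V x))).
  - intro x; split.
    + intros [Ux [V [[_ HV] Vx]]]. split; auto. intro; subst; auto.
    + intros [Ux Hx]. split; auto. destruct (HT x z Hx) as [V [? [? ?]]].
      exists V; auto.
  - apply open_inter; auto.
Qed.

Lemma crowd_other {X} (t : topology X) (U : X -> Prop) (z : X) :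
  crowded t -> is_open t U -> (exists u, U u) -> exists x, U x /\ x <> z.
Proof.
  intros Hc HU [u Hu].
  destruct (classic (exists x, U x /\ x <> z)) as [H|H]; auto.
  exfalso. apply (Hc z). unfold isolated.
  apply (open_ext t U); auto.
  intro x; split.
  - intro Ux. apply NNPP; intro Hn. apply H; eauto.
  - intros ->. apply NNPP; intro Hn. apply H. exists u. split; auto.
    intros ->; auto.
Qed.

Definition keys {X} (p : list (X * bool)) (x : X) : Prop := exists b, In (x, b) p.

Lemma avoid_list {X} (t : topology X) (U : X -> Prop) (p : list (X * bool)) :
  crowded t -> T1 t -> is_open t U -> (exists u, U u) ->
  is_open t (fun x => U x /\ ~ keys p x) /\ exists x, U x /\ ~ keys p x.
Proof.
  intros Hc HT HU Hne. induction p as [|[a b] l IH].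
  - split.
    + apply (open_ext t U); [|exact HU]. intro x; split; [|tauto].
      intro; split; auto. intros [b Hb]; inversion Hb.
    + destruct Hne as [u Hu]; exists u; split; auto. intros [b Hb]; inversion Hb.
  - destruct IH as [IH1 IH2].
    assert (Heq : forall x, (U x /\ ~ keys l x) /\ x <> a <-> U x /\ ~ keys ((a,b)::l) x).
    { intro x; split.
      - intros [[Ux Hk] Hxa]; split; auto. intros [b' Hb']. destruct Hb' as [Hb'|Hb'].
        + inversion Hb'; subst; congruence.
        + exfalso; apply Hk; exists b'; auto.
      - intros [Ux Hk]; split; [split|]; auto.
        + intros [b' Hb']; apply Hk; exists b'; right; auto.
        + intros ->; apply Hk; exists b; left; auto. }
    split.
    + apply (open_ext t _ _ Heq). apply open_minus; auto.
    + destruct (crowd_other t _ a Hc IH1 IH2) as [x Hx]. exists x. apply Heq; auto.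
Qed.

Definition leP {X} (q p : list (X * bool)) : Prop :=
  exists l, q = p ++ l /\ forall x, keys l x -> ~ keys p x.

Definition assigned {X} (p : list (X * bool)) (y : X) (b : bool) : Prop :=
  exists m l, p = m ++ (y, b) :: l /\ ~ keys m y.

Lemma assigned_uniq {X} (p : list (X * bool)) y b1 b2 :
  assigned p y b1 -> assigned p y b2 -> b1 = b2.
Proof.
  intros [m1 [l1 [E1 K1]]] [m2 [l2 [E2 K2]]]. subst p.
  revert m2 E2 K2 K1. induction m1 as [|a m1 IH]; intros m2 E2 K2 K1; destruct m2 as [|a' m2];
    simpl in *.
  - inversion E2; auto.
  - inversion E2; subst. exfalso; apply K2. exists b1; left; auto.
  - inversion E2; subst. exfalso; apply K1. exists b2; left; auto.
  - inversion E2; subst. apply (IH m2); auto.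
    + intros [b Hb]; apply K2; exists b; right; auto.
    + intros [b Hb]; apply K1; exists b; right; auto.
Qed.

Lemma assigned_mono {X} (p q : list (X * bool)) y b :
  leP q p -> assigned p y b -> assigned q y b.
Proof.
  intros [l [-> _]] [m [l0 [-> K]]]. exists m, (l0 ++ l). split; auto.
  rewrite <- app_assoc. reflexivity.
Qed.

Lemma keys_app {X} (p l : list (X*bool)) x : keys (p ++ l) x -> keys p x \/ keys l x.
Proof. intros [b Hb]. apply in_app_or in Hb. destruct Hb; [left|right]; exists b; auto. Qed.

Lemma leP_po {X} : is_partial_order (@leP X).
Proof.
  split; [|split].
  - intro p. exists []. rewrite app_nil_r. split; auto. intros x [b Hb]; inversion Hb.
  - intros p q r [l1 [E1 K1]] [l2 [E2 K2]]. subst. exists (l2 ++ l1).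
    rewrite app_assoc. split; auto. intros x Hk Hr. apply keys_app in Hk.
    destruct Hk as [Hk|Hk].
    + exact (K2 x Hk Hr).
    + apply (K1 x Hk). destruct Hr as [b Hb]; exists b; apply in_or_app; auto.
  - intros p q [l1 [E1 _]] [l2 [E2 _]]. subst.
    assert (length (l2 ++ l1) = 0).
    { apply (f_equal (@length _)) in E2. rewrite !length_app in E2.
      rewrite length_app. lia. }
    destruct l1; [rewrite app_nil_r; auto|]. rewrite length_app in H; simpl in H.
    lia.
Qed.

Fixpoint enc {X} (f : X -> nat) (p : list (X * bool)) : nat :=
  match p with
  | [] => 0
  | (x, b) :: l => S (to_nat (to_nat (f x, if b then 1 else 0), enc f l))
  end.

Lemma to_nat_inj a b : to_nat a = to_nat b -> a = b.
Proof. intro H. rewrite <- (cancel_of_to a), <- (cancel_of_to b), H; auto. Qed.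

Lemma enc_inj {X} (f : X -> nat) : (forall a b, f a = f b -> a = b) ->
  forall p q, enc f p = enc f q -> p = q.
Proof.
  intros Hf p. induction p as [|[x b] l IH]; intros [|[y c] m]; cbn [enc]; intro H;
    try discriminate; auto.
  apply eq_add_S in H. apply to_nat_inj in H. pose proof (f_equal snd H) as Hb. apply (f_equal fst) in H.
  cbn [fst snd] in H, Hb. apply to_nat_inj in H. pose proof (f_equal snd H) as Hbc.
  apply (f_equal fst) in H as Hx. cbn [fst snd] in Hx, Hbc.
  rewrite (Hf _ _ Hx), (IH m Hb). destruct b, c; auto; discriminate.
Qed.

Lemma split_lemma (X : Type) (t : topology X) :
  countable X -> crowded t -> T1 t -> weight_lt_m_c t ->
  forall R : X -> Prop, dense t R ->
  exists D : X -> Prop, (forall x, D x -> R x) /\ dense t D /\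
     dense t (fun x => R x /\ ~ D x).
Proof.
  intros [f Hf] Hc HT [I [B [[HBo HB] Hma]]] R HR.
  assert (MA : MA_countable I) by (apply Hma; exists (fun i => i); auto).
  set (Dj := fun (j : I) (p : list (X * bool)) =>
    (exists u, B j u) -> exists x y, B j x /\ R x /\ assigned p x true /\
                                   B j y /\ R y /\ assigned p y false).
  destruct (MA (list (X * bool)) leP) with (D := Dj) as [G [[_ [Gup Gdir]] HG]].
  - exists (enc f). apply enc_inj; auto.
  - constructor; exact [].
  - apply leP_po.
  - intros j p.
    destruct (classic (exists u, B j u)) as [Hne|Hne].
    + destruct (avoid_list t (B j) p Hc HT (HBo j) Hne) as [Ho Hex].
      destruct (HR _ Ho Hex) as [x [[Bx Kx] Rx]].
      destruct (avoid_list t (B j) ((x,true)::p) Hc HT (HBo j) Hne) as [Ho' Hex'].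
      destruct (HR _ Ho' Hex') as [y [[By Ky] Ry]].
      assert (Kyp : ~ keys p y) by (intros [b Hb]; apply Ky; exists b; right; auto).
      assert (Hyx : y <> x) by (intros ->; apply Ky; exists true; left; auto).
      exists (p ++ [(x,true); (y,false)]). split.
      * intros _. exists x, y. repeat split; auto.
        -- exists p, [(y,false)]. split; auto.
        -- exists (p ++ [(x,true)]), []. split.
           ++ rewrite <- app_assoc; auto.
           ++ intro Hk. apply keys_app in Hk. destruct Hk as [Hk|[b Hb]]; auto.
              destruct Hb as [Hb|[]]. inversion Hb; auto.
      * exists [(x,true); (y,false)]. split; auto.
        intros z [b [Hb|[Hb|[]]]]; inversion Hb; subst; auto.
    + exists p. split.
      * intro H; contradiction.
      * destruct (@leP_po X) as [Hr _]; apply Hr.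
  - set (D := fun x => exists p, G p /\ assigned p x true /\ R x).
    exists D. split; [|split].
    + intros x [p [_ [_ Rx]]]; auto.
    + intros U HU [u Hu]. destruct (HB U u HU Hu) as [j [Bju Hsub]].
      destruct (HG j) as [p [Gp Dp]]. destruct (Dp (ex_intro _ u Bju)) as
        [x [y [Bx [Rx [Ax _]]]]]. exists x. split; auto. exists p; auto.
    + intros U HU [u Hu]. destruct (HB U u HU Hu) as [j [Bju Hsub]].
      destruct (HG j) as [p [Gp Dp]]. destruct (Dp (ex_intro _ u Bju)) as
        [x [y [_ [_ [_ [By [Ry Ay]]]]]]]. exists y. split; auto. split; auto.
      intros [q [Gq [Aq _]]]. destruct (Gdir p q Gp Gq) as [r [_ [Hrp Hrq]]].
      assert (true = false); [|discriminate].
      apply (assigned_uniq r y); [apply (assigned_mono q r)|apply (assigned_mono p r)]; auto.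
Qed.

Theorem mainTheorem3 (X : Type) (t : topology X) :
  countable X -> crowded t -> T1 t -> weight_lt_m_c t -> omega_resolvable t.
Proof.
  intros H1 H2 H3 H4.
  pose proof (split_lemma X t H1 H2 H3 H4) as HS.
  assert (HS' : forall R : X -> Prop, exists D : X -> Prop, dense t R ->
     (forall x, D x -> R x) /\ dense t D /\ dense t (fun x => R x /\ ~ D x)).
  { intro R. destruct (classic (dense t R)) as [Hd|Hd].
    - destruct (HS R Hd) as [D HD]. exists D; auto.
    - exists R; intro; contradiction. }
  set (sp := fun R => proj1_sig (constructive_indefinite_description _ (HS' R))).
  assert (Hsp : forall R, dense t R -> (forall x, sp R x -> R x) /\ dense t (sp R) /\
                   dense t (fun x => R x /\ ~ sp R x)).
  { intro R. exact (proj2_sig (constructive_indefinite_description _ (HS' R))). }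
  set (Rs := fix Rs (n : nat) : X -> Prop :=
         match n with 0 => fun _ => True | S k => fun x => Rs k x /\ ~ sp (Rs k) x end).
  assert (Rd : forall n, dense t (Rs n)).
  { induction n; simpl.
    - intros U _ [u Hu]; exists u; auto.
    - apply Hsp; auto. }
  assert (Rdec : forall n m x, n <= m -> Rs m x -> Rs n x).
  { intros n m x Hle; induction Hle; auto. simpl. tauto. }
  set (Dn := fun n => sp (Rs n)).
  assert (Ddisj : forall n m x, n < m -> Dn n x -> Dn m x -> False).
  { intros n m x Hlt Hn Hm. unfold Dn in Hm. apply (Hsp _ (Rd m)) in Hm.
    apply (Rdec (S n) m x Hlt) in Hm. simpl in Hm. tauto. }
  exists (fun n x => match n with 0 => Dn 0 x \/ (forall k, ~ Dn k x) | S k => Dn (S k) x end).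
  split; [|split].
  - intros [|n].
    + intros U HU Hne. destruct (proj1 (proj2 (Hsp _ (Rd 0))) U HU Hne) as [x Hx].
      exists x; split; [tauto|left; tauto].
    + exact (proj1 (proj2 (Hsp _ (Rd (S n))))).
  - intros [|n] [|m] x Hnm Hn Hm; try congruence.
    + destruct Hn as [Hn|Hn]; [|exact (Hn _ Hm)].
      apply (Ddisj 0 (S m) x); auto. lia.
    + destruct Hm as [Hm|Hm]; [|exact (Hm _ Hn)].
      apply (Ddisj 0 (S n) x); auto. lia.
    + assert (H : n < m \/ n = m \/ m < n) by lia. destruct H as [H|[H|H]].
      * apply (Ddisj (S n) (S m) x); auto. lia.
      * congruence.
      * apply (Ddisj (S m) (S n) x); auto. lia.
  - intro x. destruct (classic (exists k, Dn k x)) as [[[|k] Hk]|Hk].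
    + exists 0; auto.
    + exists (S k); auto.
    + exists 0; right; intros k Hk'; eauto.
Qed.
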